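(* Let $A\in\mathbb{R}^{n\times n}$ be symmetric, let $\mathcal{D}$ be a distribution over matrices $S\in\mathbb{R}^{n\times\tau}$, and let $X_0 = AWA$ for some $W\in\mathbb{R}^{n\times n}$. Define iterates $$X_{k+1} = X_k + AS_k(S_k^\top A^2 S_k)^\dagger S_k^\top (A - A X_k A) S_k (S_k^\top A^2 S_k)^\dagger S_k^\top A,\qquad k\ge0,$$ with $S_0,S_1,\dots$ drawn independently from $\mathcal{D}$. For $S\sim\mathcal{D}$ let $Z\eqdef AS(S^\top A^2S)^\dagger S^\top A$, and let $$\rho \eqdef 1-\inf\Big\{\langle \mathbb{E}[ZRZ],R\rangle \;:\; R = AQA,\ Q\in\mathbb{R}^{n\times n},\ \|R\|^2=1\Big\}.$$ Then $\mathbb{E}\big[\|X_k - A^\dagger\|^2\big]\le \rho^k\,\|X_0-A^\dagger\|^2$.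
   Context: $A^\dagger$ is the Moore–Penrose pseudoinverse; $\langle X,Y\rangle=\mathrm{Tr}(X^\top Y)$ and $\|\cdot\|$ is the Frobenius norm. *)

(* Defs.v *)
From HB Require Import structures.
From mathcomp Require Import all_boot all_order all_algebra.
From mathcomp Require Import all_classical all_reals all_analysis.
Set Implicit Arguments. Unset Strict Implicit. Unset Printing Implicit Defensive.
Import Order.TTheory GRing.Theory Num.Theory.
Import numFieldNormedType.Exports.
Local Open Scope classical_set_scope.
Local Open Scope ring_scope.

Section Defs.
Variable R : realType.

Definition penrose (m n : nat) (A : 'M[R]_(m, n)) (B : 'M[R]_(n, m)) : Prop :=
  [/\ A *m B *m A = A, B *m A *m B = B,
      (A *m B)^T = A *m B & (B *m A)^T = B *m A].

Definition mpinv (m n : nat) (A : 'M[R]_(m, n)) : 'M[R]_(n, m) :=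
  xget 0 (penrose A).

Definition frob (m n : nat) (X Y : 'M[R]_(m, n)) : R := \tr (X^T *m Y).
Definition frob2 (m n : nat) (X : 'M[R]_(m, n)) : R := frob X X.

Definition Zof (n tau : nat) (A : 'M[R]_n) (S : 'M[R]_(n, tau)) : 'M[R]_n :=
  A *m S *m mpinv (S^T *m (A *m A) *m S) *m S^T *m A.

Definition step (n tau : nat) (A : 'M[R]_n) (S : 'M[R]_(n, tau)) (X : 'M[R]_n)
  : 'M[R]_n :=
  let M := mpinv (S^T *m (A *m A) *m S) in
  X + A *m S *m M *m S^T *m (A - A *m X *m A) *m S *m M *m S^T *m A.

Fixpoint sketch_iter (n tau : nat) (A : 'M[R]_n) (X : 'M[R]_n)
  (Ss : seq 'M[R]_(n, tau)) : 'M[R]_n :=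
  match Ss with
  | [::] => X
  | S0 :: Ss' => sketch_iter A (step A S0 X) Ss'
  end.

Definition mexp d (T : measurableType d) (P : probability T R) (m n : nat)
  (F : T -> 'M[R]_(m, n)) : 'M[R]_(m, n) :=
  \matrix_(i, j) (\int[P]_(w in setT) F w i j).

(* Expectation, w.r.t. k independent draws w_0,...,w_{k-1} ~ P, of a
   nonnegative extended-real function of the list [w_0; ...; w_{k-1}]
   (iterated integration = integration against the k-fold product law). *)
Fixpoint Eiid d (T : measurableType d) (P : probability T R) (k : nat)
  (f : seq T -> \bar R) : \bar R :=
  match k with
  | 0 => f [::]
  | k'.+1 => (\int[P]_w Eiid P k' (fun s => f (w :: s)))%E
  end.

Definition rho d (T : measurableType d) (P : probability T R) (n tau : nat)
  (A : 'M[R]_n) (Sk : T -> 'M[R]_(n, tau)) : R :=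
  1 - inf [set x : R | exists Q : 'M[R]_n,
             frob2 (A *m Q *m A) = 1 /\
             x = frob (mexp P (fun w => Zof A (Sk w) *m (A *m Q *m A) *m Zof A (Sk w)))
                      (A *m Q *m A)].

End Defs.

(* Main.v *)
Require Import Defs.
From HB Require Import structures.
From mathcomp Require Import all_boot all_order all_algebra.
From mathcomp Require Import all_classical all_reals all_analysis.
Import Order.TTheory GRing.Theory Num.Theory.
Import numFieldNormedType.Exports.
Local Open Scope classical_set_scope.
Local Open Scope ring_scope.
From mathcomp Require Import lra.
Set Implicit Arguments. Unset Strict Implicit. Unset Printing Implicit Defensive.

Section LA.
Variable R : realType.

Lemma mul_self_ge0 (x : R) : 0 <= x * x.
Proof. by rewrite -expr2 sqr_ge0. Qed.

Lemma frobE m n (X Y : 'M[R]_(m,n)) :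
  frob X Y = \sum_i \sum_j X i j * Y i j.
Proof.
rewrite /frob /mxtrace; under eq_bigr do rewrite mxE.
rewrite exchange_big /=; apply: eq_bigr => i _; apply: eq_bigr => j _.
by rewrite mxE.
Qed.

Lemma frob2_ge0 m n (X : 'M[R]_(m,n)) : 0 <= frob2 X.
Proof.
rewrite /frob2 frobE; apply: sumr_ge0 => i _; apply: sumr_ge0 => j _.
by rewrite -expr2 sqr_ge0.
Qed.

Lemma frob2_eq0 m n (X : 'M[R]_(m,n)) : frob2 X = 0 -> X = 0.
Proof.
rewrite /frob2 frobE => h; apply/matrixP => i j; rewrite mxE.
have h1 := psumr_eq0P (fun i _ => sumr_ge0 _ (fun j _ => mul_self_ge0 (X i j))) h.
have h2 := h1 i isT.
have h3 : X i j * X i j = 0 := psumr_eq0P (fun j _ => mul_self_ge0 (X i j)) h2 (i:=j) isT.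
by move/eqP: h3; rewrite mulf_eq0 orbb => /eqP.
Qed.

Lemma entry_le_frob2 m n (X : 'M[R]_(m,n)) i j : X i j ^+ 2 <= frob2 X.
Proof.
rewrite /frob2 frobE (bigD1 i) //= (bigD1 j) //= -expr2 -addrA lerDl.
apply: addr_ge0; first by apply: sumr_ge0 => k _; exact: mul_self_ge0.
apply: sumr_ge0 => k _; apply: sumr_ge0 => l _; exact: mul_self_ge0.
Qed.

Lemma KKt_unit r m (K : 'M[R]_(r,m)) : row_free K -> K *m K^T \in unitmx.
Proof.
move=> fK; rewrite -row_free_unit /row_free.
set N := kermx (K *m K^T).
have hN : N *m (K *m K^T) = 0 by exact: mulmx_ker.
have NK0 : N *m K = 0.
  apply: trmx_inj; rewrite trmx0; apply: frob2_eq0.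
  rewrite /frob2 /frob (trmxK (N *m K)) trmx_mul !mulmxA -(mulmxA N) hN.
  by rewrite mul0mx mxtrace0.
have N0 : N = 0 by apply/eqP; rewrite -(mulmx_free_eq0 _ fK) NK0.
have := mxrank_ker (K *m K^T); rewrite -/N N0 mxrank0 => /esym/eqP.
rewrite subn_eq0 => h; rewrite eqn_leq h andbT; exact: rank_leq_row.
Qed.

Lemma penrose_fact m n r (C : 'M[R]_(m,r)) (F : 'M[R]_(r,n)) :
  C^T *m C \in unitmx -> F *m F^T \in unitmx ->
  penrose (C *m F) (F^T *m invmx (F *m F^T) *m invmx (C^T *m C) *m C^T).
Proof.
move=> u2 u1.
set U1 := invmx (F *m F^T); set U2 := invmx (C^T *m C).
have sU1 : U1^T = U1 by rewrite /U1 trmx_inv trmx_mul trmxK.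
have sU2 : U2^T = U2 by rewrite /U2 trmx_inv trmx_mul trmxK.
have h1 p (Y : 'M[R]_(r, p)) : F *m (F^T *m (U1 *m Y)) = Y.
  by rewrite !mulmxA mulmxV // mul1mx.
have h2 p (Y : 'M[R]_(r, p)) : C^T *m (C *m (U2 *m Y)) = Y.
  by rewrite !mulmxA mulmxV // mul1mx.
have h3 p (Y : 'M[R]_(r, p)) : U2 *m (C^T *m (C *m Y)) = Y.
  by rewrite (mulmxA C^T) mulmxA mulVmx // mul1mx.
have AB : C *m F *m (F^T *m U1 *m U2 *m C^T) = C *m U2 *m C^T.
  by rewrite -!mulmxA h1.
have BA : (F^T *m U1 *m U2 *m C^T) *m (C *m F) = F^T *m U1 *m F.
  by rewrite -!mulmxA h3.
split.
- by rewrite AB -!mulmxA h3.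
- by rewrite BA -!mulmxA h1.
- by rewrite AB !trmx_mul trmxK sU2 mulmxA.
- by rewrite BA !trmx_mul trmxK sU1 mulmxA.
Qed.

Lemma penrose_ex m n (A : 'M[R]_(m,n)) : exists B, penrose A B.
Proof.
have fF : row_free (row_base A) by exact: row_base_free.
have fC : row_free (col_base A)^T.
  by rewrite /row_free mxrank_tr; exact: col_base_full.
have u1 := KKt_unit fF; have u2 := KKt_unit fC; rewrite trmxK in u2.
rewrite -(mulmx_base A); eexists; exact: penrose_fact.
Qed.

Lemma mpinvP m n (A : 'M[R]_(m,n)) : penrose A (mpinv A).
Proof. rewrite /mpinv; apply: xgetPex; exact: penrose_ex. Qed.


Lemma frob_sym m n (X Y : 'M[R]_(m,n)) : frob X Y = frob Y X.
Proof. by rewrite /frob -mxtrace_tr trmx_mul trmxK. Qed.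

Lemma frob2B m n (X Y : 'M[R]_(m,n)) :
  frob2 (X - Y) = frob2 X - frob X Y - frob Y X + frob2 Y.
Proof.
rewrite /frob2 /frob.
have -> : (X - Y)^T = X^T - Y^T by apply/matrixP=> i j; rewrite !mxE.
rewrite mulmxBl !mulmxBr !linearB /=.
lra.
Qed.

Section Zsec.
Variables (n : nat) (Z E : 'M[R]_n).
Hypotheses (ZT : Z^T = Z) (ZZ : Z *m Z = Z).

Lemma frobZ : frob (Z *m E *m Z) E = \tr (Z *m E^T *m Z *m E).
Proof. by rewrite /frob !trmx_mul ZT !mulmxA. Qed.

Lemma frob2Z : frob2 (Z *m E *m Z) = \tr (Z *m E^T *m Z *m E).
Proof.
rewrite /frob2 /frob !trmx_mul ZT !mulmxA -[Z *m E^T *m Z *m Z]mulmxA ZZ.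
by rewrite mxtrace_mulC !mulmxA ZZ.
Qed.

Lemma frob2_sub_ZEZ :
  frob2 (E - Z *m E *m Z) = frob2 E - frob (Z *m E *m Z) E.
Proof.
rewrite frob2B (frob_sym E) frob2Z frobZ.
lra.
Qed.

Lemma frobZ_ge0 : 0 <= frob (Z *m E *m Z) E.
Proof. by rewrite frobZ -frob2Z frob2_ge0. Qed.

Lemma frobZ_le : frob (Z *m E *m Z) E <= frob2 E.
Proof. by rewrite -subr_ge0 -frob2_sub_ZEZ frob2_ge0. Qed.

End Zsec.

Lemma tr_GMG n (G M : 'M[R]_n) : G^T = G -> G *m M *m G = G -> G *m M^T *m G = G.
Proof.
move=> GT h; have := congr1 trmx h; rewrite !trmx_mul GT mulmxA => ->.
by [].
Qed.

Lemma BMG n t (B : 'M[R]_(n,t)) (M : 'M[R]_t) :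
  B^T *m B *m M *m (B^T *m B) = B^T *m B -> B *m M *m (B^T *m B) = B.
Proof.
move=> h; apply/eqP; rewrite -subr_eq0; apply/eqP.
set D := B *m M *m (B^T *m B) - B.
have hD : D = B *m (M *m (B^T *m B) - 1%:M) by rewrite /D mulmxBr mulmx1 !mulmxA.
have BD : B^T *m D = 0.
  by rewrite /D mulmxBr !mulmxA; move: h; rewrite !mulmxA => ->; rewrite subrr.
apply: frob2_eq0; rewrite /frob2 /frob {1}hD trmx_mul -mulmxA BD mulmx0.
exact: mxtrace0.
Qed.

Lemma Zproj n t (B : 'M[R]_(n,t)) (M : 'M[R]_t) : penrose (B^T *m B) M ->
  (B *m M *m B^T)^T = B *m M *m B^T /\
  (B *m M *m B^T) *m (B *m M *m B^T) = B *m M *m B^T.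
Proof.
case=> h1 _ _ _.
have GT : (B^T *m B)^T = B^T *m B by rewrite trmx_mul trmxK.
have e1 := BMG h1.
have e2 := BMG (tr_GMG GT h1).
have BT : B^T = B^T *m B *m M *m B^T.
  have := congr1 trmx e2; rewrite !trmx_mul !trmxK !mulmxA => ->.
  by [].
split.
- rewrite !trmx_mul trmxK.
  rewrite {1}BT !mulmxA.
  by move: e2; rewrite !mulmxA => ->.
- by rewrite !mulmxA; move: e1; rewrite !mulmxA => ->.
Qed.

Lemma step_sub n tau (A Ad X : 'M[R]_n) (S : 'M[R]_(n,tau)) :
  A *m Ad *m A = A ->
  step A S X - Ad = (X - Ad) - Zof A S *m (X - Ad) *m Zof A S.
Proof.
move=> hAd.
have e : A - A *m X *m A = - (A *m (X - Ad) *m A).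
  by rewrite mulmxBr mulmxBl hAd opprB.
rewrite /step /Zof e.
rewrite !(mulmxN, mulNmx) !mulmxA.
by rewrite addrAC.
Qed.

Lemma step_form n tau (A W : 'M[R]_n) (S : 'M[R]_(n,tau)) :
  step A S (A *m W *m A) =
  A *m (W + S *m mpinv (S^T *m (A *m A) *m S) *m S^T *m (A - A *m (A *m W *m A) *m A) *m S *m mpinv (S^T *m (A *m A) *m S) *m S^T) *m A.
Proof. by rewrite /step [in RHS]mulmxDr [in RHS]mulmxDl !mulmxA. Qed.

Lemma pinv_AQA n (A Ad : 'M[R]_n) : A^T = A -> penrose A Ad ->
  Ad = A *m (Ad^T *m Ad *m A *m Ad *m Ad^T) *m A.
Proof.
move=> hA [h1 h2 h3 h4].
have e1 : Ad *m A = A *m Ad^T by rewrite -{1}h4 trmx_mul hA.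
have e2 : A *m Ad = Ad^T *m A by rewrite -{1}h3 trmx_mul hA.
by rewrite !mulmxA -e1 h2 h2 -mulmxA -e2 mulmxA h2.
Qed.

Lemma Zof_proj n tau (A : 'M[R]_n) (S : 'M[R]_(n,tau)) : A^T = A ->
  (Zof A S)^T = Zof A S /\ Zof A S *m Zof A S = Zof A S.
Proof.
move=> hA.
have eB : S^T *m (A *m A) *m S = (A *m S)^T *m (A *m S).
  by rewrite trmx_mul hA !mulmxA.
have eZ : Zof A S = (A *m S) *m mpinv ((A *m S)^T *m (A *m S)) *m (A *m S)^T.
  by rewrite /Zof eB trmx_mul hA !mulmxA.
rewrite eZ; apply: Zproj; exact: mpinvP.
Qed.

End LA.

Section Main.
Variables (R : realType) (d : measure_display) (T : measurableType d)
  (P : probability T R).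

Definition BM (f : T -> R) := measurable_fun setT f /\ exists M, forall x, `|f x| <= M.

Lemma BM_int f : BM f -> P.-integrable setT (EFin \o f).
Proof.
case=> mf [M hM]; apply: measurable_bounded_integrable => //.
  have h1 : (P setT < +oo)%E by rewrite probability_setT ltry.
  exact: h1.
rewrite /bounded_near; near=> M0; move=> x _ /=; apply: le_trans (hM x) _; near: M0; apply: nbhs_pinfty_ge; exact: num_real.
Unshelve. all: by end_near.
Qed.

Lemma BM_cst c : BM (fun=> c).
Proof. by split; [exact: measurable_cst | exists `|c| => x]. Qed.

Lemma BM_add f g : BM f -> BM g -> BM (fun x => f x + g x).
Proof.
move=> [mf [Mf hf]] [mg [Mg hg]]; split; first exact: measurable_realfun.measurable_funD.
exists (Mf + Mg) => x; apply: le_trans (ler_normD _ _) _; exact: lerD.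
Qed.

Lemma BM_mul f g : BM f -> BM g -> BM (fun x => f x * g x).
Proof.
move=> [mf [Mf hf]] [mg [Mg hg]]; split; first exact: measurable_realfun.measurable_funM.
exists (`|Mf| * `|Mg|) => x; rewrite normrM.
apply: ler_pM => //; apply: le_trans (ler_norm _); [exact: hf | exact: hg].
Qed.

Lemma BM_sub f g : BM f -> BM g -> BM (fun x => f x - g x).
Proof.
move=> hf hg.
have -> : (fun x => f x - g x) = (fun x => f x + (-1) * g x).
  by apply: funext => x; rewrite mulN1r.
by apply: BM_add => //; apply: BM_mul => //; exact: BM_cst.
Qed.

Lemma BM_sum (I : Type) (s : seq I) (F : I -> T -> R) :
  (forall i, BM (F i)) -> BM (fun x => \sum_(i <- s) F i x).
Proof.
move=> hF; elim: s => [|a s IH].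
  have -> : (fun x => \sum_(i <- [::]) F i x) = fun=> 0.
    by apply: funext => x; rewrite big_nil.
  exact: BM_cst.
have -> : (fun x => \sum_(i <- a :: s) F i x) = fun x => F a x + \sum_(i <- s) F i x.
  by apply: funext => x; rewrite big_cons.
exact: BM_add.
Qed.

Lemma Rint_sum (I : Type) (s : seq I) (F : I -> T -> R) :
  (forall i, BM (F i)) ->
  \int[P]_w (\sum_(i <- s) F i w) = \sum_(i <- s) \int[P]_w F i w.
Proof.
move=> hF; elim: s => [|a s IH].
  rewrite big_nil (@eq_Rintegral _ _ _ P _ (fun=> 0)); last by move=> w _; rewrite big_nil.
  by rewrite Rintegral_cst // mul0r.
rewrite big_cons (@eq_Rintegral _ _ _ P _ (fun w => F a w + \sum_(i <- s) F i w)).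
  rewrite RintegralD //; [by rewrite IH | exact: BM_int | exact: BM_int (BM_sum _ hF)].
by move=> w _; rewrite big_cons.
Qed.

Lemma le_integral_nn (f g : T -> \bar R) : (forall x, (0 <= f x)%E) ->
  (forall x, (f x <= g x)%E) -> (\int[P]_x f x <= \int[P]_x g x)%E.
Proof.
move=> f0 fg; have g0 x : (0 <= g x)%E := le_trans (f0 x) (fg x).
rewrite !ge0_integralE //.
apply: ereal_sup_le => _ [h hf <-]; exists h => //= x.
apply: le_trans (hf x) _; rewrite /patch /=.
by case: ifP.
Qed.

Lemma Eiid_ge0 k : forall f, (forall s, (0 <= f s)%E) -> (0 <= Eiid P k f)%E.
Proof.
elim: k => [|k IH] f f0 /=; first exact: f0.
by apply: integral_ge0 => w _; apply: IH => s; exact: f0.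
Qed.

Lemma Rint_cstP (c : R) : \int[P]_w c = c.
Proof.
rewrite Rintegral_cst // -[RHS]mulr1; congr (_ * _).
exact: (f_equal fine (probability_setT P)).
Qed.

End Main.

Section Main2.
Variables (R : realType) (n tau : nat) (A : 'M[R]_n) (d : measure_display)
  (T : measurableType d) (P : probability T R) (S : T -> 'M[R]_(n, tau)).
Hypothesis hA : A^T = A.
Hypothesis hm : forall i j, measurable_fun setT (fun w => Zof A (S w) i j).

Local Notation Z w := (Zof A (S w)).

Lemma ZT w : (Z w)^T = Z w. Proof. by case: (Zof_proj (S w) hA). Qed.
Lemma ZZ w : Z w *m Z w = Z w. Proof. by case: (Zof_proj (S w) hA). Qed.

Lemma frob2Z_le (E : 'M[R]_n) w : frob2 (Z w *m E *m Z w) <= frob2 E.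
Proof. by rewrite (frob2Z E (ZT w) (ZZ w)) -frobZ ?ZT //; exact: frobZ_le (ZT w) (ZZ w). Qed.

Lemma BM_Zij i j : BM (fun w => Z w i j).
Proof.
split; first exact: hm.
exists (1 + frob2 (1%:M : 'M[R]_n)) => w.
have h1 : Z w *m 1%:M *m Z w = Z w by rewrite mulmx1 ZZ.
have h2 := entry_le_frob2 (Z w *m 1%:M *m Z w) i j.
rewrite h1 in h2; have h3 := frob2Z_le 1%:M w; rewrite h1 in h3.
have h4 : `|Z w i j| ^+ 2 = Z w i j ^+ 2 by rewrite real_normK // num_real.
have h5 : 0 <= `|Z w i j| by [].
nra.
Qed.

Lemma BM_ZUZ (U : 'M[R]_n) i j : BM (fun w => (Z w *m U *m Z w) i j).
Proof.
have -> : (fun w => (Z w *m U *m Z w) i j) =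
   (fun w => \sum_k (\sum_l Z w i l * U l k) * Z w k j).
  apply: funext => w; rewrite mxE; apply: eq_bigr => k _; by rewrite mxE.
apply: BM_sum => k; apply: BM_mul; last exact: BM_Zij.
apply: BM_sum => l; apply: BM_mul; [exact: BM_Zij | exact: BM_cst].
Qed.

Definition phi (E : 'M[R]_n) w := frob (Z w *m E *m Z w) E.

Lemma phiE (E : 'M[R]_n) :
  phi E = fun w => \sum_i \sum_j (Z w *m E *m Z w) i j * E i j.
Proof. by apply: funext => w; rewrite /phi frobE. Qed.

Lemma BM_phi E : BM (phi E).
Proof.
rewrite phiE; apply: BM_sum => i; apply: BM_sum => j.
apply: BM_mul; [exact: BM_ZUZ | exact: BM_cst].
Qed.

Lemma PhiE E : frob (mexp P (fun w => Z w *m E *m Z w)) E = \int[P]_w phi E w.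
Proof.
rewrite frobE phiE Rint_sum; last first.
  by move=> i; apply: BM_sum => j; apply: BM_mul; [exact: BM_ZUZ | exact: BM_cst].
apply: eq_bigr => i _; rewrite Rint_sum; last first.
  by move=> j; apply: BM_mul; [exact: BM_ZUZ | exact: BM_cst].
apply: eq_bigr => j _; rewrite mxE RintegralZr //; apply: BM_int; exact: BM_ZUZ.
Qed.

Lemma Phi_ge0 E : 0 <= \int[P]_w phi E w.
Proof. apply: Rintegral_ge0 => w _; exact: frobZ_ge0 (ZT w) (ZZ w). Qed.

Lemma Phi_le E : \int[P]_w phi E w <= frob2 E.
Proof.
apply: le_trans (@le_Rintegral _ _ _ P setT _ (fun=> frob2 E) _ _ _ _) _.
- exact: measurableT.
- apply: BM_int; exact: (BM_phi E).
- apply: BM_int; exact: (BM_cst _).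
- by move=> w _; exact: frobZ_le (ZT w) (ZZ w).
- by rewrite Rint_cstP.
Qed.


Lemma frobZZ m (a b : R) (X Y : 'M[R]_m) : frob (a *: X) (b *: Y) = a * b * frob X Y.
Proof.
rewrite /frob.
have -> : (a *: X)^T = a *: X^T by apply/matrixP => i j; rewrite !mxE.
rewrite -scalemxAl -scalemxAr !mxtraceZ; exact: mulrA.
Qed.

Lemma phiZ t E w : phi (t *: E) w = t ^+ 2 * phi E w.
Proof. by rewrite /phi -scalemxAr -scalemxAl frobZZ expr2. Qed.

Definition Sset := [set x : R | exists Q : 'M[R]_n, frob2 (A *m Q *m A) = 1 /\
  x = frob (mexp P (fun w => Z w *m (A *m Q *m A) *m Z w)) (A *m Q *m A)].

Lemma rhoE : rho P A S = 1 - inf Sset.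
Proof. by []. Qed.

Lemma Sset_lb : lbound Sset 0.
Proof. move=> x [Q [_ ->]]; rewrite PhiE; exact: Phi_ge0. Qed.

Lemma inf_le1 : inf Sset <= 1.
Proof.
have [[x hx]|h0] := pselect (exists x, Sset x).
  apply: le_trans (ge_inf (ex_intro _ 0 Sset_lb) hx) _.
  case: hx => Q [h1 ->]; rewrite PhiE -h1; exact: Phi_le.
have -> : Sset = set0.
  by apply/seteqP; split => x // hx; exfalso; apply: h0; exists x.
by rewrite inf0 ler01.
Qed.

Lemma rho_ge0 : 0 <= rho P A S.
Proof. by rewrite rhoE subr_ge0 inf_le1. Qed.

Lemma key Q : (1 - rho P A S) * frob2 (A *m Q *m A) <= \int[P]_w phi (A *m Q *m A) w.
Proof.
rewrite rhoE (_ : 1 - (1 - inf Sset) = inf Sset); last by lra.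
set E := A *m Q *m A.
have [c0|cpos] : frob2 E = 0 \/ 0 < frob2 E.
  by have := frob2_ge0 E; rewrite le_eqVlt => /orP [/eqP <-|->]; [left|right].
  by rewrite c0 mulr0; exact: Phi_ge0.
set c := frob2 E; set t := (Num.sqrt c)^-1.
have ht : t ^+ 2 * c = 1.
  by rewrite /t exprVn sqr_sqrtr ?ltW // mulVf // gt_eqF.
have hx : Sset (t ^+ 2 * \int[P]_w phi E w).
  exists (t *: Q).
  have eE : A *m (t *: Q) *m A = t *: E by rewrite -scalemxAr -scalemxAl.
  rewrite eE; split; first by rewrite /frob2 frobZZ -expr2; exact: ht.
  rewrite PhiE (@eq_Rintegral _ _ _ P _ (fun w => t ^+ 2 * phi E w) (phi (t *: E))).
    rewrite RintegralZl //; apply: BM_int; exact: BM_phi.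
  by move=> w _; rewrite phiZ.
have := ler_wpM2r (ltW cpos) (ge_inf (ex_intro _ 0 Sset_lb) hx).
by rewrite (mulrC (t ^+ 2)) -mulrA ht mulr1.
Qed.

Lemma main k : forall W,
  (Eiid P k (fun ws => (frob2 (sketch_iter A (A *m W *m A) (map S ws) - mpinv A))%:E)
   <= ((rho P A S) ^+ k * frob2 (A *m W *m A - mpinv A))%:E)%E.
Proof.
have [h1 _ _ _] := mpinvP A.
have eQ := pinv_AQA hA (mpinvP A).
set Q0 := _ *m _ *m _ *m _ *m _ in eQ.
elim: k => [|k IH] W /=; first by rewrite expr0 mul1r.
have hE : A *m (W - Q0) *m A = A *m W *m A - mpinv A.
  by rewrite [in RHS]eQ mulmxBr mulmxBl.
have hk := key (W - Q0); rewrite hE mulrBl mul1r in hk.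
set E := A *m W *m A - mpinv A in hE hk *.
set rk := rho P A S ^+ k.
pose M w := mpinv ((S w)^T *m (A *m A) *m S w).
pose W' w := W + S w *m M w *m (S w)^T *m (A - A *m (A *m W *m A) *m A) *m S w *m M w *m (S w)^T.
apply: le_trans (@le_integral_nn _ _ _ P _ (fun w => (rk * frob2 (A *m W' w *m A - mpinv A))%:E) _ _) _.
- move=> w; apply: Eiid_ge0 => s; rewrite lee_fin; exact: frob2_ge0.
- move=> w; rewrite step_form; exact: IH.
rewrite (eq_integral (fun w => (rk * (frob2 E - phi E w))%:E)); last first.
  move=> w _; congr EFin; congr (_ * _).
  rewrite /W' /M -step_form step_sub // frob2_sub_ZEZ //; [exact: ZT | exact: ZZ].
have hB : BM (fun w => rk * (frob2 E - phi E w)).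
  by apply: BM_mul; [exact: BM_cst | apply: BM_sub; [exact: BM_cst | exact: BM_phi]].
rewrite -[X in (X <= _)%E]fineK; last by apply: integrable_fin_num => //; apply: BM_int; exact: hB.
rewrite lee_fin.
have hR : \int[P]_w (rk * (frob2 E - phi E w)) = rk * (frob2 E - \int[P]_w phi E w).
  rewrite RintegralZl //; last first.
    by apply: BM_int; apply: BM_sub; [exact: BM_cst | exact: BM_phi].
  rewrite RintegralB //; [ | apply: BM_int; exact: BM_cst | apply: BM_int; exact: BM_phi].
  by rewrite Rint_cstP.
rewrite /Rintegral in hR; rewrite hR.
rewrite exprSr -/rk -mulrA; apply: ler_wpM2l; first exact: exprn_ge0 rho_ge0.
rewrite /Rintegral in hk; lra.
Qed.

End Main2.

Unset Implicit Arguments.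

Theorem theorem4 (R : realType) (n tau : nat) (A W : 'M[R]_n)
  (d : measure_display) (T : measurableType d) (P : probability T R)
  (S : T -> 'M[R]_(n, tau)) (k : nat) :
  A^T = A ->
  (forall i j, measurable_fun setT (fun w => Zof A (S w) i j)) ->
  (Eiid P k (fun ws => (frob2 (sketch_iter A (A *m W *m A) (map S ws) - mpinv A))%:E)
   <= ((rho P A S) ^+ k * frob2 (A *m W *m A - mpinv A))%:E)%E.
Proof.
move=> hA hm; exact: (@main R n tau A d T P S hA hm k W).
Qed.
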